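(* Let $n\ge1$. The map $\mathrm{GDes}\colon\mathfrak{S}_n\to\mathcal{Q}_n$ is order preserving, and for all $u\in\mathfrak{S}_n$ and $J\subseteq[n-1]$, $$\zeta_J\le u\iff J\subseteq\mathrm{GDes}(u).$$ That is, $(Z,\mathrm{GDes})$ with $Z(J)=\zeta_J$ is a Galois connection $\mathcal{Q}_n\rightleftarrows\mathfrak{S}_n$.
   Context: $\mathcal{Q}_n$ is the Boolean poset of subsets of $[n-1]$ ordered by inclusion. $\mathfrak{S}_n$ carries the weak order: $u\le v$ iff $\mathrm{Inv}(u)\subseteq\mathrm{Inv}(v)$, $\mathrm{Inv}(u)=\{(i,j):i<j,\ u_i>u_j\}$ (one-line notation). A permutation $u\in\mathfrak{S}_n$ has a global descent at $p\in[n-1]$ if $u_i>u_j$ for all $i\le p<j$ (equivalently $\{u_1,\ldots,u_p\}=\{n-p+1,\ldots,n\}$); $\mathrm{GDes}(u)$ is the set of global descents. For $J=\{p_1<\cdots<p_k\}\subseteq[n-1]$, $\zeta_J=(n{-}p_1{+}1,\ldots,n,\ n{-}p_2{+}1,\ldots,n{-}p_1,\ \ldots,\ 1,\ldots,n{-}p_k)$, and $\zeta_\emptyset=1_n$. *)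

(* Defs.v *)
From mathcomp Require Import all_boot all_fingroup.
Set Implicit Arguments. Unset Strict Implicit. Unset Printing Implicit Defensive.

(* Positions and values are shifted
   down by one (0-indexed): the one-line word of u is (u 0, ..., u (n-1)).
   A subset of [n-1] = {1,...,n-1} is a {set 'I_n} not containing 0. *)

Definition Inv n (u : 'S_n) : {set 'I_n * 'I_n} :=
  [set ij : 'I_n * 'I_n | (ij.1 < ij.2)%N && (u ij.2 < u ij.1)%N].

Definition weak_le n (u v : 'S_n) : bool := Inv u \subset Inv v.

Definition subset_nm1 n (J : {set 'I_n}) : bool := J \subset [set p : 'I_n | (0 < p)%N].

(* global descent at p in [n-1] (1-indexed): u_i > u_j for all i <= p < j;
   with 0-indexed positions i, j this reads  i < p <= j. *)
Definition GDes n (u : 'S_n) : {set 'I_n} :=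
  [set p : 'I_n | (0 < p)%N &&
     [forall i : 'I_n, forall j : 'I_n, ((i < p)%N && (p <= j)%N) ==> (u j < u i)%N]].

(* For 1-indexed position i' = i+1 lying in the block a < i' <= b, with
   a, b consecutive elements of {0} u J u {n}, the (1-indexed) value is
   n - b + (i' - a).  0-indexed: value n - b + i - a, where
   a = max ({0} u {p in J | p <= i}),  b = min ({n} u {p in J | i < p}). *)
Definition zeta_lo n (J : {set 'I_n}) (i : 'I_n) : nat :=
  \max_(p in J | (p <= i)%N) (p : nat).
Definition zeta_hi n (J : {set 'I_n}) (i : 'I_n) : nat :=
  n - \max_(p in J | (i < p)%N) (n - p).
Definition zeta_val n (J : {set 'I_n}) (i : 'I_n) : nat :=
  n - zeta_hi J i + i - zeta_lo J i.
Definition zeta_fun n (J : {set 'I_n}) (i : 'I_n) : 'I_n := insubd i (zeta_val J i).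

(* The word zeta_fun J is a permutation of 'I_n (a mathematical fact); the
   identity fallback is never used but keeps the definition total. *)
Definition zeta n (J : {set 'I_n}) : 'S_n :=
  if injectiveb (zeta_fun J) =P true is ReflectT H then perm (elimT (injectiveP _) H)
  else 1%g.

(* Main.v *)
Require Import Defs.
From mathcomp Require Import all_boot all_fingroup zify.
Set Implicit Arguments. Unset Strict Implicit. Unset Printing Implicit Defensive.

Section Z.
Variable n : nat.
Variable J : {set 'I_n}.

Lemma lo_le (i : 'I_n) : zeta_lo J i <= i.
Proof. by apply/bigmax_leqP => p /andP[_ ]. Qed.

Lemma lo_ge (i p : 'I_n) : p \in J -> p <= i -> p <= zeta_lo J i.
Proof. by move=> pJ pi; apply: (leq_bigmax_cond (F:=fun p : 'I_n => (p:nat))); rewrite pJ. Qed.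

Lemma hi_gt (i : 'I_n) : i < zeta_hi J i.
Proof.
rewrite /zeta_hi.
have : \max_(p in J | i < p) (n - p) < n - i.
  have hi := ltn_ord i.
  rewrite (@leq_trans (\max_(p in J | i < p) (n - p)).+1) //.
  have H : \max_(p in J | i < p) (n - p) <= (n - i).-1.
    apply/bigmax_leqP => p /andP[_ ip]; have := ltn_ord p; lia.
  lia.
have := ltn_ord i; lia.
Qed.

Lemma hi_le (i : 'I_n) : zeta_hi J i <= n.
Proof. rewrite /zeta_hi; lia. Qed.

Lemma hi_lep (i p : 'I_n) : p \in J -> i < p -> zeta_hi J i <= p.
Proof.
move=> pJ ip; rewrite /zeta_hi.
have : n - p <= \max_(p in J | i < p) (n - p).
  by apply: (leq_bigmax_cond (F:=fun p : 'I_n => n - p)); rewrite pJ.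
have := ltn_ord p; lia.
Qed.

Lemma same_block (i j : 'I_n) : i <= j ->
  (forall p : 'I_n, p \in J -> ~~ ((i < p) && (p <= j))) ->
  zeta_lo J i = zeta_lo J j /\ zeta_hi J i = zeta_hi J j.
Proof.
move=> ij H; split.
  rewrite /zeta_lo; apply: eq_bigl => p; case pJ: (p \in J) => //=.
  have := H p pJ; lia.
rewrite /zeta_hi; congr (_ - _); apply: eq_bigl => p; case pJ: (p \in J) => //=.
have := H p pJ; lia.
Qed.

Lemma zv_bounds (i : 'I_n) :
  n - zeta_hi J i <= zeta_val J i /\ zeta_val J i + zeta_lo J i < n.
Proof.
have := lo_le i; have := hi_gt i; have := hi_le i; rewrite /zeta_val; lia.
Qed.

Lemma zf_val (i : 'I_n) : (zeta_fun J i : nat) = zeta_val J i.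
Proof.
rewrite /zeta_fun val_insubd; case: (zv_bounds i) => _ h.
by rewrite ifT //; lia.
Qed.

Lemma zv_cmp (i j : 'I_n) : i < j ->
  (zeta_val J j < zeta_val J i) = [exists p in J, (i < p) && (p <= j)]
  /\ (~~ [exists p in J, (i < p) && (p <= j)] -> zeta_val J i < zeta_val J j).
Proof.
move=> ij.
case: (boolP [exists p in J, (i < p) && (p <= j)]) => [/existsP[p /andP[pJ /andP[ip pj]]] | /existsPn Hn].
  have h1 := hi_lep pJ ip; have h2 := lo_ge pJ pj.
  case: (zv_bounds i) (zv_bounds j) => a _ [_ b].
  split => //; apply/idP; lia.
have [el eh] : zeta_lo J i = zeta_lo J j /\ zeta_hi J i = zeta_hi J j.
  apply: same_block; first by apply: ltnW.
  by move=> p pJ; have := Hn p; rewrite pJ.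
have := lo_le i; have := hi_gt j; have := hi_le j.
rewrite /zeta_val el eh => *; split; last by move=> _; lia.
apply/negbTE; rewrite -leqNgt; lia.
Qed.

Lemma zf_inj : injective (zeta_fun J).
Proof.
move=> i j e; have e' : zeta_val J i = zeta_val J j by rewrite -!zf_val e.
apply/val_inj => /=; case: (ltngtP i j) => // h.
- case: (zv_cmp h) => a b; case: (boolP [exists p in J, _]) a b => c a b.
  + by move: a; rewrite e' ltnn.
  + by move: (b isT); rewrite e' ltnn.
- case: (zv_cmp h) => a b; case: (boolP [exists p in J, _]) a b => c a b.
  + by move: a; rewrite e' ltnn.
  + by move: (b isT); rewrite e' ltnn.
Qed.

Lemma zetaE (i : 'I_n) : (zeta J i : nat) = zeta_val J i.
Proof.
rewrite /zeta; case: (injectiveb (zeta_fun J) =P true) => [H|H].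
  by rewrite permE zf_val.
by case: H; apply/injectiveP; apply: zf_inj.
Qed.

End Z.

Theorem mainTheorem4 (n : nat) (hn : (1 <= n)%N) :
  (forall u v : 'S_n, weak_le u v -> GDes u \subset GDes v) /\
  (forall (u : 'S_n) (J : {set 'I_n}), subset_nm1 J ->
     weak_le (zeta J) u <-> J \subset GDes u).
Proof.
split.
  move=> u v /subsetP uv; apply/subsetP => p; rewrite !inE => /andP[-> /=].
  move=> /forallP H; apply/forallP => i; apply/forallP => j; apply/implyP => /andP[ip pj].
  have := H i => /forallP /(_ j); rewrite ip pj /= => uji.
  have : (i, j) \in Inv u by rewrite inE /= uji andbT; apply: leq_trans ip pj.
  by move/uv; rewrite inE => /andP[].
move=> u J /subsetP J0; split.
  move=> /subsetP H; apply/subsetP => p pJ; rewrite inE.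
  have := J0 p pJ; rewrite inE => -> /=.
  apply/forallP => i; apply/forallP => j; apply/implyP => /andP[ip pj].
  have ij : i < j by apply: leq_trans ip pj.
  have : (i, j) \in Inv (zeta J).
    rewrite inE /= ij /= !zetaE; case: (zv_cmp J ij) => -> _.
    by apply/existsP; exists p; rewrite pJ ip pj.
  by move/H; rewrite inE => /andP[].
move=> /subsetP H; apply/subsetP => -[i j]; rewrite !inE /= => /andP[ij].
rewrite !zetaE; case: (zv_cmp J ij) => -> _ /existsP[p /andP[pJ /andP[ip pj]]].
rewrite ij /=; have := H p pJ; rewrite inE => /andP[_ /forallP /(_ i) /forallP /(_ j)].
by rewrite ip pj.
Qed.
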